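(* Let $p \geq q$ and $n\ge 1$ be positive integers and let $B$ be a $p\times q$ matrix with nonnegative real entries. Let $C$ be the $(nq+p)\times(nq+p)$ block matrix whose first block row is $[\,0_p\ B\ B\ \cdots\ B\,]$ ($n$ copies of $B$), whose first block column is $[\,0_p\ B^T\ \cdots\ B^T\,]^T$ ($n$ copies of $B^T$), and whose remaining blocks are all zero; and let $D$ be the $(np+q)\times(np+q)$ block matrix whose first block row is $[\,0_q\ B^T\ B^T\ \cdots\ B^T\,]$ ($n$ copies of $B^T$), whose first block column is $[\,0_q\ B\ \cdots\ B\,]^T$ ($n$ copies of $B$), and whose remaining blocks are all zero. Then the normalized Laplacians $L(C\oplus 0_{(n-1)(p-q)})$ and $L(D)$ are cospectral.
   Context: For matrices $X,Y$, $X\oplus Y=\begin{bmatrix} X&0\\0&Y\end{bmatrix}$; $0_m$ is the $m\times m$ zero matrix. For a nonnegative real symmetric matrix $M$ with positive row sums, its normalized Laplacian is $L(M)=I-\Delta^{-1/2}M\Delta^{-1/2}$, where $\Delta$ is the diagonal matrix of row sums of $M$. If $M$ has zero row sums, write (after a simultaneous permutation of rows and columns) $M=M_1\oplus 0_k$ where $M_1$ has positive row sums; then $L(M)=L(M_1)\oplus I_k$ (equivalently, $L(M)=I-(\Delta^{\dagger})^{1/2}M(\Delta^{\dagger})^{1/2}$ with $\Delta^\dagger$ the Moore–Penrose inverse of $\Delta$). Two square matrices are cospectral if they have the same eigenvalues with the same multiplicities. *)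

(* Defs.v *)
From HB Require Import structures.
From mathcomp Require Import all_boot all_order all_algebra.
From mathcomp Require Import reals.
Set Implicit Arguments. Unset Strict Implicit. Unset Printing Implicit Defensive.
Import Order.TTheory GRing.Theory Num.Theory.
Local Open Scope ring_scope.

Definition dsum (R : realType) (m k : nat) (X : 'M[R]_m) (Y : 'M[R]_k)
  : 'M[R]_(m + k) := block_mx X 0 0 Y.

Definition rowsum (R : realType) (m : nat) (M : 'M[R]_m) (i : 'I_m) : R :=
  \sum_(j < m) M i j.

(* Normalized Laplacian L(M) = I - (Delta^+)^{1/2} M (Delta^+)^{1/2},
   where Delta^+ is the Moore-Penrose inverse of the diagonal row-sum matrix:
   its (i,i) entry is 1/d_i if d_i > 0 and 0 if d_i = 0.  In mathcomp,
   x^-1 = x for non-units, in particular 0^-1 = 0, so (sqrt d)^-1 is exactly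
   the square root of the Moore-Penrose entry. *)
Definition normLap (R : realType) (m : nat) (M : 'M[R]_m) : 'M[R]_m :=
  1%:M - \matrix_(i, j) ((Num.sqrt (rowsum M i))^-1 * M i j
                          * (Num.sqrt (rowsum M j))^-1).

(* Cospectral: same eigenvalues with the same (algebraic) multiplicities,
   i.e. equal characteristic polynomials. *)
Definition cospectral (R : realType) (m k : nat) (A : 'M[R]_m) (B : 'M[R]_k)
  : Prop := char_poly A = char_poly B.

(* [B B ... B] (n copies), a p x nq matrix: row i is the row-major
   vectorisation of the n x q matrix all of whose rows equal row i of B. *)
Definition repRow (R : realType) (p q n : nat) (B : 'M[R]_(p, q))
  : 'M[R]_(p, n * q) :=
  \matrix_(i < p) mxvec (\matrix_(k < n, j < q) B i j).

Definition Cmat (R : realType) (p q n : nat) (B : 'M[R]_(p, q))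
  : 'M[R]_(p + n * q) :=
  block_mx (0 : 'M_p) (repRow n B) (repRow n B)^T (0 : 'M_(n * q)).

Definition Dmat (R : realType) (p q n : nat) (B : 'M[R]_(p, q))
  : 'M[R]_(q + n * p) :=
  block_mx (0 : 'M_q) (repRow n B^T) (repRow n B^T)^T (0 : 'M_(n * p)).

(* Main.v *)
Require Import Defs.
From HB Require Import structures.
From mathcomp Require Import all_boot all_order all_algebra.
From mathcomp Require Import reals ring zify.
Import Order.TTheory GRing.Theory Num.Theory.
Local Open Scope ring_scope.
Set Implicit Arguments. Unset Strict Implicit.

Section S.
Variable R : realType.

Lemma poly_eq_ev (P Q : {poly R}) : (forall x, x != 1 -> P.[x] = Q.[x]) -> P = Q.
Proof.
move=> h; apply/eqP; rewrite -subr_eq0; apply/negPn/negP => nz.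
pose rs := [seq (i.+2)%:R : R | i <- iota 0 (size (P - Q))].
have H1 : all (root (P - Q)) rs.
  apply/allP => y /mapP [i _ ->]; rewrite /root hornerD hornerN h ?subrr //.
  by apply/negP => /eqP; move/(congr1 (fun z => z == 1%:R)); rewrite eqr_nat eqxx.
have H2 : uniq rs.
  by rewrite map_inj_uniq ?iota_uniq // => a b /eqP; rewrite eqr_nat => /eqP [].
by have := max_poly_roots nz H1 H2; rewrite size_map size_iota ltnn.
Qed.

Lemma cp_ev m (A : 'M[R]_m) x : (char_poly A).[x] = \det (x%:M - A).
Proof.
rewrite -horner_evalE -det_map_mx /char_poly_mx; congr (\det _); apply/matrixP => i j.
rewrite !mxE /= rmorphB rmorphMn /= !horner_evalE hornerX hornerC.
done.
Qed.

Lemma det_blk1 p m (t : R) (X : 'M[R]_(p, m)) : t != 0 ->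
  \det (block_mx (t%:M) X X^T (t%:M)) = t ^+ m * \det (t%:M - t^-1 *: (X *m X^T)).
Proof.
move=> t0.
have -> : block_mx (t%:M) X X^T (t%:M) = block_mx 1%:M (t^-1 *: X) 0 1%:M
   *m block_mx (t%:M - t^-1 *: (X *m X^T)) 0 X^T (t%:M).
  rewrite mulmx_block ?mul1mx ?mul0mx ?mulmx0 ?add0r ?addr0 -scalemxAl subrK.
  by rewrite mul_mx_scalar scalerA mulfV // scale1r.
by rewrite det_mulmx det_ublock det_lblock !det1 !mul1r det_scalar mulrC.
Qed.

Lemma det_blk2 p m (t : R) (X : 'M[R]_(p, m)) : t != 0 ->
  \det (block_mx (t%:M) X X^T (t%:M)) = t ^+ p * \det (t%:M - t^-1 *: (X^T *m X)).
Proof.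
move=> t0.
have -> : block_mx (t%:M) X X^T (t%:M) = block_mx 1%:M 0 (t^-1 *: X^T) 1%:M
   *m block_mx (t%:M) X 0 (t%:M - t^-1 *: (X^T *m X)).
  rewrite mulmx_block ?mul1mx ?mul0mx ?mulmx0 ?add0r ?addr0; congr block_mx.
    by rewrite mul_mx_scalar scalerA mulfV // scale1r.
  by rewrite -scalemxAl addrC subrK.
by rewrite det_mulmx det_ublock det_lblock !det1 ?mul1r ?mulr1 det_scalar.
Qed.

Definition adj m (M : 'M[R]_m) : 'M[R]_m :=
  \matrix_(i, j) ((Num.sqrt (rowsum M i))^-1 * M i j * (Num.sqrt (rowsum M j))^-1).

Definition NB p q (B : 'M[R]_(p, q)) : 'M[R]_(p, q) :=
  \matrix_(i, j) ((Num.sqrt (\sum_k B i k))^-1 * B i j * (Num.sqrt (\sum_k B k j))^-1).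

Lemma adjE m (M : 'M[R]_m) i j :
  adj M i j = (Num.sqrt (rowsum M i))^-1 * M i j * (Num.sqrt (rowsum M j))^-1.
Proof. by rewrite mxE. Qed.

Lemma adj_dsum0 a b (M : 'M[R]_a) : adj (dsum M (0 : 'M_b)) = block_mx (adj M) 0 0 0.
Proof.
have rsL i : rowsum (dsum M (0 : 'M_b)) (lshift b i) = rowsum M i.
  rewrite /rowsum /dsum big_split_ord /= (eq_bigr (fun j => M i j)) => [|j _]; last first.
    by rewrite block_mxEul.
  by rewrite [X in _ + X]big1 ?addr0 // => j _; rewrite block_mxEur mxE.
apply/matrixP => i j; rewrite -[i]splitK -[j]splitK.
case: (split i) => i'; case: (split j) => j' /=; rewrite adjE /dsum.
- by rewrite !rsL !block_mxEul adjE.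
- by rewrite !block_mxEur mxE mulr0 mul0r.
- by rewrite !block_mxEdl mxE mulr0 mul0r.
- by rewrite !block_mxEdr mxE mulr0 mul0r.
Qed.

Lemma sum_rep n q (F : 'I_(n * q) -> R) :
  \sum_k F k = \sum_(a < n) \sum_(j < q) F (mxvec_index a j).
Proof.
rewrite (reindex _ (curry_mxvec_bij _ _)) /= pair_bigA.
by apply: eq_bigr => [[a j]].
Qed.

Lemma repRowE p q n (B : 'M[R]_(p, q)) i a j : repRow n B i (mxvec_index a j) = B i j.
Proof. by rewrite /repRow mxE mxvecE mxE. Qed.

Lemma rowsum_rep p q n (B : 'M[R]_(p, q)) i :
  \sum_k repRow n B i k = n%:R * \sum_j B i j.
Proof.
rewrite sum_rep (eq_bigr (fun _ => \sum_j B i j)) => [|a _]; last first.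
  by apply: eq_bigr => j _; rewrite repRowE.
by rewrite sumr_const card_ord mulr_natl.
Qed.

Lemma repRow_mul p q n (N : 'M[R]_(p, q)) :
  repRow n N *m (repRow n N)^T = n%:R *: (N *m N^T).
Proof.
apply/matrixP => i i'; rewrite !mxE sum_rep.
rewrite (eq_bigr (fun _ => \sum_j N i j * N i' j)) => [|a _]; last first.
  by apply: eq_bigr => j _; rewrite repRowE mxE repRowE.
rewrite sumr_const card_ord mulr_natl; congr (_ *+ _).
by apply: eq_bigr => j _; rewrite mxE.
Qed.

Definition sc n : R := (Num.sqrt n%:R)^-1.

Lemma adj_C p q n (B : 'M[R]_(p, q)) :
  adj (Cmat n B) = block_mx 0 (sc n *: repRow n (NB B)) (sc n *: repRow n (NB B))^T 0.
Proof.
have rsL i : rowsum (Cmat n B) (lshift _ i) = n%:R * \sum_j B i j.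
  rewrite /rowsum /Cmat big_split_ord /= big1 => [|j _]; last by rewrite block_mxEul mxE.
  rewrite add0r -rowsum_rep; apply: eq_bigr => k _; by rewrite block_mxEur.
have rsR a j : rowsum (Cmat n B) (rshift p (mxvec_index a j)) = \sum_i B i j.
  rewrite /rowsum /Cmat big_split_ord /= [X in _ + X]big1 => [|k _]; last by rewrite block_mxEdr mxE.
  rewrite addr0; apply: eq_bigr => k _; by rewrite block_mxEdl mxE repRowE.
apply/matrixP => i k; rewrite -[i]splitK -[k]splitK.
case: (split i) => i'; case: (split k) => k' /=; rewrite adjE.
- by rewrite {2}/Cmat !block_mxEul mxE mulr0 mul0r.
- case/mxvec_indexP: k' => a j.
  rewrite rsL rsR {1}/Cmat !block_mxEur repRowE [RHS]mxE repRowE /NB mxE.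
  rewrite sqrtrM ?ler0n // invfM /sc; by rewrite !mulrA.
- case/mxvec_indexP: i' => a j.
  rewrite rsL rsR {1}/Cmat !block_mxEdl [X in _ * X / _]mxE repRowE [RHS]mxE [RHS]mxE repRowE /NB mxE sqrtrM ?ler0n // invfM /sc; ring.
- by rewrite {2}/Cmat !block_mxEdr mxE mulr0 mul0r.
Qed.

Lemma NB_tr p q (B : 'M[R]_(p, q)) : NB B^T = (NB B)^T.
Proof.
apply/matrixP => i j; rewrite !mxE.
rewrite (eq_bigr (fun k => B k i)) => [|k _]; last by rewrite mxE.
rewrite (eq_bigr (fun k => B j k)) => [|k _]; last by rewrite mxE.
ring.
Qed.

Lemma sc2 n : (0 < n)%N -> sc n * sc n * n%:R = 1.
Proof.
move=> n0; rewrite /sc -invfM -expr2 sqr_sqrtr ?ler0n // mulVf //.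
by rewrite pnatr_eq0 -lt0n.
Qed.

Lemma XXt p q n (N : 'M[R]_(p, q)) : (0 < n)%N ->
  (sc n *: repRow n N) *m (sc n *: repRow n N)^T = N *m N^T.
Proof.
move=> n0; rewrite linearZ /= -scalemxAl -scalemxAr scalerA repRow_mul scalerA sc2 //.
by rewrite scale1r.
Qed.

Lemma shift_lap m (M : 'M[R]_m) x : x%:M - normLap M = (x - 1)%:M + adj M.
Proof.
change (x%:M - (1%:M - adj M) = (x - 1)%:M + adj M).
by rewrite opprB addrA addrAC raddfB.
Qed.

End S.

Unset Implicit Arguments.
Set Strict Implicit.

Theorem theorem3p3 (R : realType) (p q n : nat)
  (hq : (0 < q)%N) (hqp : (q <= p)%N) (hn : (1 <= n)%N)
  (B : 'M[R]_(p, q)) (hB : forall i j, 0 <= B i j) :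
  cospectral (normLap (dsum (Cmat n B) (0 : 'M[R]_((n - 1) * (p - q)))))
             (normLap (Dmat n B)).
Proof.
rewrite /cospectral; apply: poly_eq_ev => x x1; rewrite !cp_ev !shift_lap.
have t0 : x - 1 != 0 by rewrite subr_eq0.
set t := x - 1.
rewrite adj_dsum0 adj_C.
rewrite (scalar_mx_block (p + n * q) ((n - 1) * (p - q))) add_block_mx ?addr0 ?add0r.
rewrite (scalar_mx_block p (n * q)) add_block_mx ?addr0 ?add0r.
rewrite det_ublock det_scalar det_blk1 // XXt //.
change (Dmat n B) with (Cmat n B^T).
rewrite adj_C (scalar_mx_block q (n * p)) add_block_mx ?addr0 ?add0r det_blk1 // XXt //.
rewrite NB_tr trmxK.
set N := NB B.
have syl := det_blk1 N t0; rewrite det_blk2 // in syl.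
apply: (mulfI (expf_neq0 q t0)).
transitivity (t ^+ (n * q + (n - 1) * (p - q)) * (t ^+ q * \det (t%:M - t^-1 *: (N *m N^T)))).
  rewrite exprD; ring.
rewrite -syl !mulrA -!exprD; congr (t ^+ _ * _).
case: n hn => // n' _; rewrite subSS subn0 -(subnKC hqp); nia.
Qed.
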